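(* Consider a convex $n$-gon with vertices $0,\dots,n-1$ in cyclic order, integers $0<a<b<c<n-1$, and $V_R=\{0,\dots,a-1\}$, $V_B=\{a,\dots,b-1\}$, $V_L=\{b,\dots,c-1\}$, $V_T=\{c,\dots,n-1\}$, with $|V_L|\ge3$, $|V_R|\ge 3$, $|V_T|\ge 2$, $|V_B|\ge2$. Let $B_Q$ be the set of all edges joining a vertex of $V_R$ to a vertex of $V_L$ together with all edges joining a vertex of $V_T$ to a vertex of $V_B$. Let $B_T$ be a saturated blocker for triangulations of the convex polygon with vertex set $V_T\cup\{0,c-1\}$, and $B_B$ a saturated blocker for triangulations of the convex polygon with vertex set $V_B\cup\{a-1,b\}$. Then $B_M=\big(B_Q\setminus\{(0,c-1),(a-1,b)\}\big)\cup B_T\cup B_B$ is a saturated blocker for triangulations of the $n$-gon, of size $|V_T||V_B|+|V_L||V_R|+|B_T|+|B_B|-2$.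
   Context: An edge $(i,j)$ is the segment between vertices $i,j$; boundary edges of a convex polygon join cyclically consecutive vertices, diagonals are the other edges. Two edges cross if they share an interior point. A triangulation of a convex polygon is a maximal set of pairwise non-crossing diagonals of it. A blocker is a set $B$ of diagonals having a diagonal in common with every triangulation; it is saturated if for every $e\in B$, $B\setminus\{e\}$ is not a blocker. *)

(* Defs.v *)
From mathcomp Require Import all_boot all_order.
Set Implicit Arguments. Unset Strict Implicit. Unset Printing Implicit Defensive.

(* Vertices of the convex n-gon are 'I_n, in cyclic order 0,1,...,n-1.
   An edge (i,j) is represented by the ordered pair (i,j) with i < j. *)
Definition edge (n : nat) := ('I_n * 'I_n)%type.

Definition edge_is n (e : edge n) (i j : nat) : bool :=
  (val e.1 == i) && (val e.2 == j).

(* A convex polygon whose vertex set S is a subset of the vertices of the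
   convex n-gon; its cyclic order is the induced one.  e is a diagonal of it:
   both endpoints in S and they are not cyclically consecutive in S. *)
Definition is_diag n (S : {set 'I_n}) (e : edge n) : bool :=
  [&& e.1 \in S, e.2 \in S, e.1 < e.2,
      [exists k in S, (e.1 < k) && (k < e.2)] &
      [exists k in S, (k < e.1) || (e.2 < k)]].

Definition diagonals n (S : {set 'I_n}) : {set edge n} := [set e | is_diag S e].

(* Two edges cross (share an interior point) iff their endpoints interleave
   strictly (vertices in convex position). *)
Definition cross n (e f : edge n) : bool :=
  [&& e.1 < f.1, f.1 < e.2 & e.2 < f.2] || [&& f.1 < e.1, e.1 < f.2 & f.2 < e.2].

Definition noncrossing n (T : {set edge n}) : Prop :=
  forall e f, e \in T -> f \in T -> ~~ cross e f.

Definition triangulation n (S : {set 'I_n}) (T : {set edge n}) : Prop :=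
  [/\ T \subset diagonals S, noncrossing T &
      forall T' : {set edge n}, T \subset T' -> T' \subset diagonals S -> noncrossing T' -> T' = T].

Definition blocker n (S : {set 'I_n}) (B : {set edge n}) : Prop :=
  B \subset diagonals S /\
  forall T, triangulation S T -> exists2 e, e \in B & e \in T.

Definition saturated_blocker n (S : {set 'I_n}) (B : {set edge n}) : Prop :=
  blocker S B /\ forall e, e \in B -> ~ blocker S (B :\ e).

(* Main.v *)
Require Import Defs.
From mathcomp Require Import all_boot all_order.
From mathcomp Require Import zify.
From Stdlib Require Import Classical.
Set Implicit Arguments. Unset Strict Implicit. Unset Printing Implicit Defensive.

Ltac clean := repeat match goal with
 | H : is_true (in_mem _ _) |- _ => clear H
 | H : forall _, _ |- _ => clear H
 | H : is_true (is_diag _ _) |- _ => clear H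
 | H : is_true (subset _ _) |- _ => clear H
 | H : noncrossing _ |- _ => clear H
 | H : triangulation _ _ |- _ => clear H
 end.
Ltac slia := clean; lia.

Section Gen.
Variable n : nat.
Implicit Types (S : {set 'I_n}) (T : {set edge n}) (e f g d : edge n).

Lemma crossC e f : cross e f = cross f e.
Proof. by rewrite /cross orbC. Qed.

Lemma cross_irr e : cross e e = false.
Proof. by rewrite /cross ltnn. Qed.

Lemma diagE S e : (e \in diagonals S) = is_diag S e.
Proof. by rewrite inE. Qed.

Lemma diagP S e : is_diag S e ->
  [/\ e.1 \in S, e.2 \in S, e.1 < e.2,
      exists k, (k \in S) && (e.1 < k < e.2) &
      exists k, (k \in S) && ((k < e.1) || (e.2 < k))].
Proof.
case/and5P=> h1 h2 h3 /existsP[k /andP[k1 k2]] /existsP[k' /andP[k1' k2']].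
split=> //; [exists k | exists k']; apply/andP; split=> //.
Qed.

Lemma mk_diag S e (k k' : 'I_n) : e.1 \in S -> e.2 \in S -> e.1 < e.2 ->
  k \in S -> e.1 < k < e.2 -> k' \in S -> (k' < e.1) || (e.2 < k') -> is_diag S e.
Proof.
move=> h1 h2 h3 hk hk2 hk' hk2'; apply/and5P; split=> //.
  by apply/existsP; exists k; rewrite hk.
by apply/existsP; exists k'; rewrite hk'.
Qed.

Lemma diag_mono S S' e : S \subset S' -> is_diag S e -> is_diag S' e.
Proof.
move=> /subsetP sS /diagP[h1 h2 h3 [k /andP[hk hk2]] [k' /andP[hk' hk2']]].
exact: (mk_diag (k:=k) (k':=k')) (sS _ h1) (sS _ h2) h3 (sS _ hk) hk2 (sS _ hk') hk2'.
Qed.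

Section Split.
Variables (S : {set 'I_n}) (u v : 'I_n).
Definition S1 := [set x in S | (u <= x) && (x <= v)].
Definition S2 := [set x in S | (x <= u) || (v <= x)].

Lemma S1sub : S1 \subset S.
Proof. by apply/subsetP=> x; rewrite inE => /andP[]. Qed.
Lemma S2sub : S2 \subset S.
Proof. by apply/subsetP=> x; rewrite inE => /andP[]. Qed.

Lemma F2 f g : is_diag S1 f -> is_diag S2 g -> cross f g = false.
Proof.
move=> /diagP[]; rewrite !inE => /andP[_ a1] /andP[_ a2] a3 _ _.
move=> /diagP[]; rewrite !inE => /andP[_ b1] /andP[_ b2] b3 _ _.
rewrite /cross; slia.
Qed.

Lemma F3 f : (is_diag S1 f || is_diag S2 f) -> cross (u, v) f = false.
Proof.
case/orP=> /diagP[]; rewrite !inE => /andP[_ a1] /andP[_ a2] a3 _ _; rewrite /cross /=; slia.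
Qed.

Lemma F4 g : u < v -> u \in S -> v \in S -> is_diag S g -> cross (u, v) g = false ->
  [|| is_diag S1 g, is_diag S2 g | g == (u, v)].
Proof.
move=> uv uS vS /diagP[g1 g2 g12 [k /andP[kS kb]] [k' /andP[k'S k'b]]].
rewrite /cross /= => nc.
have geq : (g.1 == u :> nat) && (g.2 == v :> nat) -> g == (u, v).
  by case: g {g1 g2 g12 kb k'b nc} => x y /= /andP[/eqP/val_inj-> /eqP/val_inj->].
have [hin|hout] := boolP ((u <= g.1) && (g.2 <= v)).
  have [hd|hd] := boolP ((g.1 == u :> nat) && (g.2 == v :> nat)); first by rewrite geq ?orbT.
  apply/orP; left.
  have [hu|hu] := boolP (u < g.1).
    apply: (mk_diag (k:=k) (k':=u)); rewrite ?inE ?g1 ?g2 ?kS ?uS //=; slia.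
  apply: (mk_diag (k:=k) (k':=v)); rewrite ?inE ?g1 ?g2 ?kS ?vS //=; slia.
have r1 : (g.1 <= u) || (v <= g.1) by slia.
have r2 : (g.2 <= u) || (v <= g.2) by slia.
have [hd|hd] := boolP ((g.1 == u :> nat) && (g.2 == v :> nat)); first by rewrite geq ?orbT.
apply/orP; right; apply/orP; left.
have [wk|wk] := boolP ((k <= u) || (v <= k)).
  have [wk'|wk'] := boolP ((k' <= u) || (v <= k')).
    apply: (mk_diag (k:=k) (k':=k')); rewrite ?inE ?g1 ?g2 ?kS ?k'S //=.
  have [hu|hu] := boolP (u < g.1).
    apply: (mk_diag (k:=k) (k':=u)); rewrite ?inE ?g1 ?g2 ?kS ?uS ?leqnn //=; slia.
  apply: (mk_diag (k:=k) (k':=v)); rewrite ?inE ?g1 ?g2 ?kS ?vS ?leqnn ?orbT //=; slia.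
have [wk'|wk'] := boolP ((k' <= u) || (v <= k')).
  have [hu|hu] := boolP (g.1 < u).
    apply: (mk_diag (k:=u) (k':=k')); rewrite ?inE ?g1 ?g2 ?uS ?k'S ?leqnn //=; slia.
  apply: (mk_diag (k:=v) (k':=k')); rewrite ?inE ?g1 ?g2 ?vS ?k'S ?leqnn ?orbT //=; slia.
have [hu|hu] := boolP (g.1 < u).
  have [hv|hv] := boolP (v < g.2).
    apply: (mk_diag (k:=u) (k':=k')); rewrite ?inE ?g1 ?g2 ?uS ?k'S ?leqnn //=; slia.
  apply: (mk_diag (k:=u) (k':=v)); rewrite ?inE ?g1 ?g2 ?uS ?vS ?leqnn ?orbT //=; slia.
apply: (mk_diag (k:=v) (k':=u)); rewrite ?inE ?g1 ?g2 ?uS ?vS ?leqnn ?orbT //=; slia.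
Qed.

End Split.
End Gen.

Section Glue.
Variable n : nat.
Implicit Types (T : {set edge n}) (e f g : edge n).
Variables (S P Q : {set 'I_n}) (d : edge n).
Hypothesis hP : P \subset S.
Hypothesis hQ : Q \subset S.
Hypothesis hPQ : forall f g, is_diag P f -> is_diag Q g -> cross f g = false.
Hypothesis hdP : forall f, is_diag P f -> cross d f = false.
Hypothesis hdQ : forall f, is_diag Q f -> cross d f = false.
Hypothesis hsplit : forall g, is_diag S g -> cross d g = false ->
  [|| is_diag P g, is_diag Q g | g == d].

Lemma diag_sub_mono (X Y : {set 'I_n}) : X \subset Y -> diagonals X \subset diagonals Y.
Proof. by move=> sXY; apply/subsetP=> e; rewrite !inE; apply: diag_mono. Qed.

Lemma restrict T : triangulation S T -> d \in T -> triangulation P (T :&: diagonals P).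
Proof.
case=> sT ncT maxT dT; split.
- by apply/subsetP=> f /setIP[].
- by move=> e f /setIP[eT _] /setIP[fT _]; apply: ncT.
move=> T' sub sD ncT'.
have key : forall f g, f \in T' -> g \in T -> ~~ cross f g.
  move=> f g fT' gT.
  have fP : is_diag P f by rewrite -diagE (subsetP sD).
  have gS : is_diag S g by rewrite -diagE (subsetP sT).
  have := hsplit gS (negbTE (ncT _ _ dT gT)).
  case/or3P=> [gP|gQ|/eqP->].
  - by apply: ncT' => //; apply: (subsetP sub); rewrite inE gT diagE.
  - by rewrite hPQ.
  - by rewrite crossC hdP.
have H : T :|: T' = T.
  apply: maxT; first exact: subsetUl.
  - rewrite subUset sT /=; apply: subset_trans sD _; exact: diag_sub_mono.
  move=> e f /setUP[eT|eT'] /setUP[fT|fT'].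
  - exact: ncT.
  - by rewrite crossC key.
  - exact: key.
  - exact: ncT'.
apply/eqP; rewrite eqEsubset sub andbT; apply/subsetP=> f fT'.
rewrite inE (subsetP sD _ fT') andbT -H inE fT' orbT //.
Qed.

Lemma glue T1 T2 : is_diag S d -> triangulation P T1 -> triangulation Q T2 ->
  triangulation S (T1 :|: T2 :|: [set d]).
Proof.
move=> dS [sT1 nc1 max1] [sT2 nc2 max2].
have memT : forall f, f \in T1 :|: T2 :|: [set d] ->
   [|| (f \in T1) && is_diag P f, (f \in T2) && is_diag Q f | f == d].
  move=> f /setUP[/setUP[h|h]|/set1P->]; last by rewrite eqxx !orbT.
  - by rewrite h /= -diagE (subsetP sT1).
  - by apply/orP; right; apply/orP; left; rewrite h -diagE (subsetP sT2).
have ncT : noncrossing (T1 :|: T2 :|: [set d]).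
  move=> e f /memT/or3P[/andP[e1 eP]|/andP[e2 eQ]|/eqP->] /memT/or3P[/andP[f1 fP]|/andP[f2 fQ]|/eqP->].
  - exact: nc1.
  - by rewrite hPQ.
  - by rewrite crossC hdP.
  - by rewrite crossC hPQ.
  - exact: nc2.
  - by rewrite crossC hdQ.
  - by rewrite hdP.
  - by rewrite hdQ.
  - by rewrite cross_irr.
split=> //.
- rewrite !subUset sub1set diagE dS andbT.
  by rewrite (subset_trans sT1 (diag_sub_mono hP)) (subset_trans sT2 (diag_sub_mono hQ)).
move=> T' sub sD ncT'.
have dT' : d \in T' by apply: (subsetP sub); rewrite !inE eqxx orbT.
apply/eqP; rewrite eqEsubset sub andbT; apply/subsetP=> f fT'.
have fS : is_diag S f by rewrite -diagE (subsetP sD).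
have := hsplit fS (negbTE (ncT' _ _ dT' fT')).
case/or3P=> [fP|fQ|/eqP->]; last by rewrite !inE eqxx orbT.
- suff <- : T' :&: diagonals P = T1 by rewrite !inE fT' fP.
  apply: max1.
  + by rewrite subsetI sT1 andbT (subset_trans _ sub) // (subset_trans (subsetUl T1 T2)) // subsetUl.
  + exact: subsetIr.
  + by move=> e g /setIP[eT _] /setIP[gT _]; apply: ncT'.
- suff <- : T' :&: diagonals Q = T2 by rewrite !inE fT' fQ orbT.
  apply: max2.
  + by rewrite subsetI sT2 andbT (subset_trans _ sub) // (subset_trans (subsetUr T1 T2)) // subsetUl.
  + exact: subsetIr.
  + by move=> e g /setIP[eT _] /setIP[gT _]; apply: ncT'.
Qed.
End Glue.

Section Inst.
Variable n : nat.
Implicit Types (S : {set 'I_n}) (T : {set edge n}) (e f g : edge n).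

Lemma glue12 S (u v : 'I_n) T1 T2 : is_diag S (u, v) ->
  triangulation (S1 S u v) T1 -> triangulation (S2 S u v) T2 ->
  triangulation S (T1 :|: T2 :|: [set (u, v)]).
Proof.
move=> dS; have [uS vS uv _ _] := diagP dS.
apply: glue => //.
- exact: S1sub.
- exact: S2sub.
- exact: F2.
- by move=> f hf; rewrite (F3 (S:=S)) // hf.
- by move=> f hf; rewrite (F3 (S:=S)) // hf orbT.
- by move=> g gS ng; apply: F4.
Qed.

Lemma restrict1 S (u v : 'I_n) T : triangulation S T -> (u, v) \in T ->
  triangulation (S1 S u v) (T :&: diagonals (S1 S u v)).
Proof.
move=> tT dT; have [sT _ _] := tT.
have := subsetP sT _ dT; rewrite diagE => /diagP[uS vS uv _ _].
apply: (restrict (S:=S) (Q:=S2 S u v) (d:=(u,v))) => //.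
- exact: S1sub.
- exact: F2.
- by move=> f hf; rewrite (F3 (S:=S)) // hf.
- by move=> g gS ng; apply: F4.
Qed.

Lemma restrict2 S (u v : 'I_n) T : triangulation S T -> (u, v) \in T ->
  triangulation (S2 S u v) (T :&: diagonals (S2 S u v)).
Proof.
move=> tT dT; have [sT _ _] := tT.
have := subsetP sT _ dT; rewrite diagE => /diagP[uS vS uv _ _].
apply: (restrict (S:=S) (Q:=S1 S u v) (d:=(u,v))) => //.
- exact: S2sub.
- by move=> f g hf hg; rewrite crossC (F2 hg hf).
- by move=> f hf; rewrite (F3 (S:=S)) // hf orbT.
- move=> g gS ng; have := F4 uv uS vS gS ng.
  by case/or3P=> ->; rewrite ?orbT.
Qed.

Definition fan S (x : 'I_n) : {set edge n} :=
  [set e in diagonals S | (e.1 == x :> nat) || (e.2 == x :> nat)].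

Lemma fan_tri S x : x \in S -> triangulation S (fan S x).
Proof.
move=> xS; split.
- by apply/subsetP=> e; rewrite inE => /andP[].
- move=> [e1 e2] [f1 f2]; rewrite !inE => /andP[/diagP[_ _ /= e12 _ _] ex] /andP[/diagP[_ _ /= f12 _ _] fx].
  rewrite /cross /=; slia.
move=> T' sub sD ncT'.
apply/eqP; rewrite eqEsubset sub andbT; apply/subsetP=> -[p q] fT'.
have fS : is_diag S (p, q) by rewrite -diagE (subsetP sD).
rewrite inE diagE fS /=.
apply/negPn/negP; rewrite negb_or => /andP[/eqP nxp /eqP nxq].
have [pS qS /= pq [k /andP[kS /= kb]] [k' /andP[k'S /= k'b]]] := diagP fS.
have cr : forall g, g \in fan S x -> cross (p, q) g -> False.
  by move=> g gf cg; have := ncT' _ _ fT' (subsetP sub _ gf); rewrite cg.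
have [h1|h1] := boolP (x < p).
  apply: (cr (x, k)).
    rewrite inE eqxx /= andbT diagE.
    apply: (mk_diag (k:=p) (k':=q)) => //=; slia.
  rewrite /cross /=; slia.
have [h2|h2] := boolP (q < x).
  apply: (cr (k, x)).
    rewrite inE eqxx /= orbT andbT diagE.
    apply: (mk_diag (k:=q) (k':=p)) => //=; slia.
  rewrite /cross /=; slia.
have [h3|h3] := boolP (k' < p).
  apply: (cr (k', x)).
    rewrite inE eqxx /= orbT andbT diagE.
    apply: (mk_diag (k:=p) (k':=q)) => //=; slia.
  rewrite /cross /=; slia.
apply: (cr (x, k')).
  rewrite inE eqxx /= andbT diagE.
  apply: (mk_diag (k:=q) (k':=p)) => //=; slia.
rewrite /cross /=; slia.
Qed.
End Inst.

Section Step.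
Variable n : nat.
Implicit Types (S : {set 'I_n}) (T : {set edge n}) (e f g : edge n).

Lemma card3 (A : {set 'I_n}) : 3 <= #|A| -> exists x y z : 'I_n,
  [/\ x \in A, y \in A, z \in A & [/\ (x:nat) <> y, (y:nat) <> z & (x:nat) <> z]].
Proof.
move/card_geqP=> [[|x [|y [|z [|? ?]]]] [un sz sub]] //.
exists x, y, z; split; try by apply: sub; rewrite !inE eqxx ?orbT.
move: un => /=; rewrite !inE !negb_or => /and3P[/andP[xy xz] yz _].
by split; apply/eqP; [exact: xy|exact: yz|exact: xz].
Qed.

Lemma card2 (A : {set 'I_n}) : 2 <= #|A| -> exists x y : 'I_n,
  [/\ x \in A, y \in A & (x:nat) <> y].
Proof.
move/card_geqP=> [[|x [|y [|? ?]]] [un sz sub]] //.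
exists x, y; split; try by apply: sub; rewrite !inE eqxx ?orbT.
move: un => /=; rewrite !inE andbT => xy; apply/eqP; exact: xy.
Qed.

Lemma tri_step T (u v : 'I_n) : triangulation setT T -> u.+1 < v ->
  ((u, v) \in T \/ ((u:nat) = 0 /\ (v:nat) = n.-1)) ->
  exists w : 'I_n, [/\ u < w < v, ((u, w) \in T \/ (w:nat) = u.+1) &
                        ((w, v) \in T \/ (w:nat).+1 = v)].
Proof.
move=> [sT ncT maxT] uv huv.
have hvn := ltn_ord v.
have h0 : u.+1 < n by slia.
pose w0 : 'I_n := Ordinal h0.
pose P := fun w : 'I_n => (u < w < v) && (((u, w) \in T) || ((w:nat) == u.+1)).
have Pw0 : P w0 by rewrite /P /= eqxx orbT andbT; apply/andP; split=> //.
case: (@arg_maxnP _ w0 P (@nat_of_ord n) Pw0) => w Pw maxw.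
move: (Pw); rewrite /P => /andP[uwv uwT].
exists w; split=> //; first by case/orP: uwT => [->|/eqP->]; [left|right].
case: (boolP ((w, v) \in T)) => wvT; first by left.
right; apply/eqP/negPn/negP => nwv.
have h1 : w.+1 < n by slia.
have dwv : is_diag setT (w, v).
  by apply: (mk_diag (k := Ordinal h1) (k' := u)); rewrite ?inE //=; slia.
case: (boolP [exists g in T, cross (w, v) g]) => [/existsP[[p q] /andP[gT cg]]|nex].
  have := subsetP sT _ gT; rewrite diagE => /diagP[_ _ /= pq _ _].
  have hq := ltn_ord q.
  move: cg; rewrite /cross /= => /orP[/and3P[wp pv vq]|/and3P[pw wq qv]].
    case: huv => [uvT|[u0 vn]]; last by slia.
    have := ncT _ _ uvT gT; rewrite /cross /=; slia.
  have [pu|up] := ltnP p u.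
    case: huv => [uvT|[u0 vn]]; last by slia.
    have := ncT _ _ uvT gT; rewrite /cross /=; slia.
  case: (eqVneq (p:nat) (u:nat)) => [epu|npu].
    have epu' : p = u by apply: val_inj.
    have Pq : P q by rewrite /P -epu' gT /=; slia.
    have := maxw q Pq; slia.
  case/orP: uwT => [uwT|/eqP wu]; last by slia.
  have := ncT _ _ uwT gT; rewrite /cross /=; slia.
have nc' : noncrossing ((w, v) |: T).
  move=> e f /setU1P[->|eT] /setU1P[->|fT].
  - by rewrite cross_irr.
  - by apply/negP=> cf; move/negP: nex; apply; apply/existsP; exists f; rewrite fT.
  - by rewrite crossC; apply/negP=> cf; move/negP: nex; apply; apply/existsP; exists e; rewrite eT.
  - exact: ncT.
have := maxT _ (subsetUr _ _) _ nc'.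
rewrite subUset sub1set diagE dwv sT => /(_ isT) eqT.
by move: wvT; rewrite -eqT setU11.
Qed.
End Step.

Lemma fanP n (S : {set 'I_n}) (x p q : 'I_n) : (p, q) \in fan S x ->
  [/\ p \in S, q \in S, p < q,
     (exists k : 'I_n, (k \in S) && (p < k < q)) &
     (exists k : 'I_n, (k \in S) && ((k < p) || (q < k))) /\ ((p:nat) = x \/ (q:nat) = x)].
Proof.
rewrite inE diagE => /andP[/diagP[h1 h2 h3 h4 h5] /= /orP[/eqP h|/eqP h]]; split=> //; split=> //; by [left|right].
Qed.

Lemma pair_eqn n (p q r l : 'I_n) : (p:nat) = r -> (q:nat) = l -> (p, q) = (r, l).
Proof. by move=> /val_inj-> /val_inj->. Qed.

Section Main.
Variables (n a b c : nat) (BT BB : {set edge n}).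
Hypothesis Ha : 3 <= a.
Hypothesis Hab : a + 2 <= b.
Hypothesis Hbc : b + 3 <= c.
Hypothesis Hcn : c + 2 <= n.

Definition VR := [set i : 'I_n | i < a].
Definition VB := [set i : 'I_n | (a <= i) && (i < b)].
Definition VL := [set i : 'I_n | (b <= i) && (i < c)].
Definition VT := [set i : 'I_n | c <= i].
Definition BQ := [set e : edge n | ((e.1 \in VR) && (e.2 \in VL))
                              || ((e.1 \in VB) && (e.2 \in VT))].
Definition ST := VT :|: [set i : 'I_n | (val i == 0) || (val i == c.-1)].
Definition SB := VB :|: [set i : 'I_n | (val i == a.-1) || (val i == b)].
Definition BM := [set e in BQ | ~~ edge_is e 0 c.-1 && ~~ edge_is e a.-1 b]
              :|: BT :|: BB.

Hypothesis sBT : saturated_blocker ST BT.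
Hypothesis sBB : saturated_blocker SB BB.

Let N := [set: 'I_n].

Definition BQar (p q : nat) := (p < a /\ b <= q /\ q < c \/ a <= p /\ p < b /\ c <= q) /\
   ~ (p = 0 /\ q = c.-1) /\ ~ (p = a.-1 /\ q = b).
Definition STar (p q : nat) := (p = 0 \/ p = c.-1 \/ c <= p) /\ (q = 0 \/ q = c.-1 \/ c <= q)
   /\ p < q /\ ~ (p = 0 /\ q = c.-1).
Definition SBar (p q : nat) := a.-1 <= p /\ q <= b /\ p < q /\ ~ (p = a.-1 /\ q = b).

Lemma BTdiag p q : (p, q) \in BT -> STar p q.
Proof.
case: sBT => [[sub _] _] /(subsetP sub); rewrite diagE => /diagP[].
rewrite /ST !inE /= => h1 h2 h3 [k /andP[]]; rewrite !inE /= => h4 h5 _.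
rewrite /STar; slia.
Qed.

Lemma BBdiag p q : (p, q) \in BB -> SBar p q.
Proof.
case: sBB => [[sub _] _] /(subsetP sub); rewrite diagE => /diagP[].
rewrite /SB !inE /= => h1 h2 h3 _ [k /andP[]]; rewrite !inE /= => h4 h5.
rewrite /SBar; slia.
Qed.

Lemma BMsplit p q : (p, q) \in BM ->
  BQar p q \/ ((p, q) \in BT /\ STar p q) \/ ((p, q) \in BB /\ SBar p q).
Proof.
rewrite /BM !inE /= => /orP[/orP[h|h]|h].
- left; move: h; rewrite /BQ /edge_is ?inE /= /BQar; slia.
- by right; left; split=> //; apply: BTdiag.
- by right; right; split=> //; apply: BBdiag.
Qed.


Lemma h0n : 0 < n. Proof. slia. Qed.
Lemma hn1n : n.-1 < n. Proof. slia. Qed.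
Lemma hc1n : c.-1 < n. Proof. slia. Qed.
Lemma ha1n : a.-1 < n. Proof. slia. Qed.
Lemma hbn : b < n. Proof. slia. Qed.
Lemma han : a < n. Proof. slia. Qed.
Lemma h1n : 1 < n. Proof. slia. Qed.
Lemma hcn : c < n. Proof. slia. Qed.
Lemma hb1n : b.-1 < n. Proof. slia. Qed.
Lemma hbp1n : b.+1 < n. Proof. slia. Qed.
Local Notation o0 := (Ordinal h0n).
Local Notation on1 := (Ordinal hn1n).
Local Notation oc1 := (Ordinal hc1n).
Local Notation oa1 := (Ordinal ha1n).
Local Notation ob := (Ordinal hbn).
Local Notation oa := (Ordinal han).
Local Notation o1 := (Ordinal h1n).
Local Notation oc := (Ordinal hcn).
Local Notation ob1 := (Ordinal hb1n).
Local Notation obp1 := (Ordinal hbp1n).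

Lemma STeq : S2 N o0 oc1 = ST.
Proof. apply/setP=> i; rewrite /ST /S2 !inE /=; apply/idP/idP; slia. Qed.
Lemma SBeq : S1 N oa1 ob = SB.
Proof. apply/setP=> i; rewrite /SB /S1 !inE /=; apply/idP/idP; slia. Qed.

Lemma BM_sub : BM \subset diagonals N.
Proof.
apply/subsetP=> -[p q]; rewrite /BM !inE => /orP[/orP[h|h]|h].
- move: h; rewrite /BQ /edge_is ?inE /= => h.
  case: (boolP (p < a)) => hp.
    by apply: (mk_diag (k := oa) (k' := on1)); rewrite ?inE //=; slia.
  by apply: (mk_diag (k := ob) (k' := o0)); rewrite ?inE //=; slia.
- case: sBT => [[sub _] _]; apply: (diag_mono (S := ST)); first exact: subsetT.
  by rewrite -diagE; exact: (subsetP sub).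
- case: sBB => [[sub _] _]; apply: (diag_mono (S := SB)); first exact: subsetT.
  by rewrite -diagE; exact: (subsetP sub).
Qed.

Lemma descent T : triangulation N T -> forall m (u v : 'I_n), v - u <= m -> u < a -> c <= v ->
  ((u, v) \in T \/ ((u:nat) = 0 /\ (v:nat) = n.-1)) ->
  exists p q : 'I_n, (p, q) \in T /\ (p < a /\ b <= q /\ q < c \/ a <= p /\ p < b /\ c <= q).
Proof.
move=> tT; elim=> [|m IH] u v hm hu hv huv; first by slia.
have h2 : u.+1 < v by slia.
have [w [uwv huw hwv]] := tri_step tT h2 huv.
have hwv' : w < a -> (w, v) \in T by case: hwv => // h; slia.
case: (ltnP w a) => wa.
  apply: (IH w v) => //; [slia | by left; apply: hwv'].
case: (ltnP w b) => wb.
  exists w, v; split; last by slia.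
  by case: hwv => // h; slia.
have huw' : (u, w) \in T by case: huw => // h; slia.
case: (ltnP w c) => wc.
  by exists u, w; split=> //; slia.
by apply: (IH u w) => //; [slia | left].
Qed.

Lemma BM_block T : triangulation N T -> exists2 f, f \in BM & f \in T.
Proof.
move=> tT.
have h1 : on1 - o0 <= n by rewrite /=; slia.
have h2 : o0 < a by rewrite /=; slia.
have h3 : c <= on1 by rewrite /=; slia.
have [p [q [pqT hpq]]] := descent tT h1 h2 h3 (or_intror (conj erefl erefl)).
case: (boolP (((p:nat) == 0) && ((q:nat) == c.-1))) => [/andP[/eqP p0 /eqP qc]|n1].
  have e : (p, q) = (o0, oc1) by apply: pair_eqn.
  have := restrict2 tT (_ : (o0, oc1) \in T); rewrite STeq -e => /(_ pqT) tri.
  case: sBT => [[_ blk] _]; have [g gBT] := blk _ tri.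
  rewrite inE => /andP[gT _]; exists g => //; by rewrite /BM !inE gBT orbT.
case: (boolP (((p:nat) == a.-1) && ((q:nat) == b))) => [/andP[/eqP p0 /eqP qc]|n2].
  have e : (p, q) = (oa1, ob) by apply: pair_eqn.
  have := restrict1 tT (_ : (oa1, ob) \in T); rewrite SBeq -e => /(_ pqT) tri.
  case: sBB => [[_ blk] _]; have [g gBB] := blk _ tri.
  rewrite inE => /andP[gT _]; exists g => //; by rewrite /BM !inE gBB !orbT.
exists (p, q) => //; rewrite /BM !inE; apply/orP; left; apply/orP; left.
rewrite /BQ /edge_is ?inE /=; slia.
Qed.


Lemma bool_false (bb : bool) : ~ bb -> bb = false.
Proof. by case: bb => // /(_ isT). Qed.

Lemma card_BM : #|BM| = #|VT| * #|VB| + #|VL| * #|VR| + #|BT| + #|BB| - 2.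
Proof.
have BQe : BQ = setX VR VL :|: setX VB VT by apply/setP=> -[p q]; rewrite /BQ !inE.
have cBQ : #|BQ| = #|VR| * #|VL| + #|VB| * #|VT|.
  rewrite BQe cardsU !cardsX.
  suff -> : setX VR VL :&: setX VB VT = set0 by rewrite cards0 subn0.
  apply/setP=> -[p q]; rewrite !inE /=; apply: bool_false; slia.
pose D := [set (o0, oc1); (oa1, ob)].
have BQ'e : [set e in BQ | ~~ edge_is e 0 c.-1 && ~~ edge_is e a.-1 b] = BQ :\: D.
  apply/setP=> -[p q]; rewrite /D /BQ !inE /edge_is /= !xpair_eqE -!val_eqE /=.
  apply/idP/idP; slia.
have cD : #|D| = 2.
  rewrite /D cards2; suff -> : ((o0, oc1) != (oa1, ob)) by [].
  rewrite xpair_eqE -!val_eqE /=; slia.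
have sub : D \subset BQ.
  apply/subsetP=> e; rewrite /D !inE => /orP[/eqP->|/eqP->]; rewrite /BQ ?inE /=; slia.
have cBQ' : #|BQ :\: D| = #|BQ| - 2 by rewrite cardsD (setIidPr sub) cD.
have cge : 2 <= #|BQ| by rewrite -cD; apply: subset_leq_card.
have d1 : (BQ :\: D) :&: BT = set0.
  apply/setP=> -[p q]; rewrite !inE /=; apply: bool_false => /andP[/andP[_ h1] h2].
  move: (BTdiag h2) h1; rewrite /BQ /STar ?inE /=; slia.
have d2 : ((BQ :\: D) :|: BT) :&: BB = set0.
  apply/setP=> -[p q]; rewrite !inE /=; apply: bool_false => /andP[/orP[/andP[_ h1]|h1] h2].
    move: (BBdiag h2) h1; rewrite /BQ /SBar ?inE /=; slia.
  move: (BBdiag h2) (BTdiag h1); rewrite /SBar /STar; slia.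
rewrite /BM BQ'e cardsU d2 cards0 subn0 cardsU d1 cards0 subn0 cBQ' cBQ.
move: cge; rewrite cBQ [#|VT| * _]mulnC [#|VL| * _]mulnC.
move: (#|VR| * #|VL|) (#|VB| * #|VT|) #|BT| #|BB| => x y z w; slia.
Qed.


Lemma BMar p q : (p, q) \in BM -> BQar p q \/ STar p q \/ SBar p q.
Proof. by case/BMsplit=> [|[[]|[]]]; auto. Qed.

Lemma not_blocker T e : triangulation N T -> (forall f, f \in T -> f \in BM -> f = e) ->
  ~ blocker N (BM :\ e).
Proof.
move=> tT hT [_ blk]; have [f] := blk _ tT; rewrite in_setD1 => /andP[fe fBM] fT.
by move: fe; rewrite (hT _ fT fBM) eqxx.
Qed.

Lemma sat_tri (S : {set 'I_n}) (B : {set edge n}) (e : edge n) : saturated_blocker S B -> e \in B ->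
  exists T, triangulation S T /\ forall f, f \in T -> f \in B -> f = e.
Proof.
case=> [[sub _] hs] eB; have nb := hs e eB.
apply: NNPP => H; apply: nb; split; first exact: subset_trans (subD1set B e) sub.
move=> T tT; apply: NNPP => H2; apply: H; exists T; split=> // f fT fB.
apply: NNPP => nfe; apply: H2; exists f => //; rewrite !inE fB andbT; apply/eqP; exact: nfe.
Qed.

Ltac fanx h :=
  let H1 := fresh "H" in let H2 := fresh "H" in let H3 := fresh "H" in
  let k := fresh "k" in let H4 := fresh "H" in let H5 := fresh "H" in
  let k' := fresh "k" in let H6 := fresh "H" in let H7 := fresh "H" in let H8 := fresh "H" in
  case/fanP: h => H1 H2 H3 [k /andP[H4 H5]] [[k' /andP[H6 H7]] H8];
  unfold S1, S2, N in H1, H2, H4, H6; rewrite ?inE /= in H1 H2 H4 H6 H8.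

Ltac edgex h :=
  let E1 := fresh "E" in let E2 := fresh "E" in
  move/eqP: h => -[/(congr1 (@nat_of_ord _)) E1 /(congr1 (@nat_of_ord _)) E2]; simpl in E1, E2.

Ltac conjnorm := repeat match goal with
 | H : is_true (_ && _) |- _ => let H' := fresh "H" in case/andP: H => H H'
 | H : _ /\ _ |- _ => let H' := fresh "H" in case: H => H H'
 end.
Ltac clear_disj := repeat match goal with
 | H : is_true (_ || _) |- _ => clear H
 | H : _ \/ _ |- _ => clear H
 | H : ~ _ |- _ => clear H
 | H : is_true (~~ _) |- _ => clear H
 end.
Ltac split_one := match goal with
 | H : is_true (_ || _) |- _ => case/orP: H => H
 | H : _ \/ _ |- _ => case: H => H
 | H : ~ ((?x:nat) = ?y /\ ?z = ?w) |- _ =>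
     let E := fresh "E" in let Hn := fresh "Hn" in
     case: (eqVneq x y) => E;
       [ have Hn : z <> w by (move=> E'; apply: H; split) | ]; clear H
 | H : is_true (~~ ((?x:nat) == ?y)) |- _ => move/eqP: H => H
 | H : ~ ((?x:nat) = ?y) |- _ => let E := fresh "E" in
     case: (ltngtP x y) => E; [ clear H | clear H | by exfalso; apply: H ]
 end.
Ltac dfs := conjnorm; first [ solve [clear_disj; lia] | split_one; dfs ].

Ltac finish fBM := let HB := fresh "HB" in
  have HB := BMar fBM; rewrite /BQar /STar /SBar /= in HB; exfalso; clean; dfs.

Lemma sat_BT e : e \in BT -> ~ blocker N (BM :\ e).
Proof.
move=> eBT; have [TT [tTT hTT]] := sat_tri sBT eBT; rewrite -STeq in tTT.
pose X := fan (S1 (S1 N o0 oc1) o0 oa) o0 :|: fan (S2 (S1 N o0 oc1) o0 oa) oc1 :|: [set (o0, oa)].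
have tX : triangulation (S1 N o0 oc1) X.
  apply: glue12.
  - apply: (mk_diag (k := o1) (k' := oc1)); rewrite /S1 ?inE /=; slia.
  - apply: fan_tri; rewrite /S1 ?inE /=; slia.
  - apply: fan_tri; rewrite /S1 /S2 ?inE /=; slia.
have dN : is_diag N (o0, oc1).
  apply: (mk_diag (k := o1) (k' := on1)); rewrite ?inE /=; slia.
have tT := glue12 dN tX tTT.
apply: (not_blocker tT) => -[p q] h fBM; move: h.
rewrite !in_setU !in_set1 => /orP[/orP[/orP[/orP[h|h]|h]|h]|h].
- fanx h; finish fBM.
- fanx h; finish fBM.
- edgex h; finish fBM.
- have [sub _ _] := tTT; have := subsetP sub _ h; rewrite diagE => /diagP[].
  rewrite /S2 /N ?inE /= => h1 h2 h3 [k /andP[]]; rewrite ?inE /= => h4 h5 _.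
  case: (BMsplit fBM) => [HB|[[H1 H2]|[H1 H2]]]; [ | exact: hTT | ].
  + rewrite /BQar in HB; exfalso; slia.
  + rewrite /SBar in H2; exfalso; slia.
- edgex h; finish fBM.
Qed.

Lemma sat_BB e : e \in BB -> ~ blocker N (BM :\ e).
Proof.
move=> eBB; have [TB [tTB hTB]] := sat_tri sBB eBB; rewrite -SBeq in tTB.
pose Y := fan (S1 (S2 N oa1 ob) ob oc) ob :|: fan (S2 (S2 N oa1 ob) ob oc) oa1 :|: [set (ob, oc)].
have tY : triangulation (S2 N oa1 ob) Y.
  apply: glue12.
  - apply: (mk_diag (k := obp1) (k' := o0)); rewrite /S2 ?inE /=; slia.
  - apply: fan_tri; rewrite /S1 /S2 ?inE /=; slia.
  - apply: fan_tri; rewrite /S1 /S2 ?inE /=; slia.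
have dN : is_diag N (oa1, ob).
  apply: (mk_diag (k := oa) (k' := o0)); rewrite ?inE /=; slia.
have tT := glue12 dN tTB tY.
apply: (not_blocker tT) => -[p q] h fBM; move: h.
rewrite !in_setU !in_set1 => /orP[/orP[h|/orP[/orP[h|h]|h]]|h].
- have [sub _ _] := tTB; have := subsetP sub _ h; rewrite diagE => /diagP[].
  rewrite /S1 /N ?inE /= => h1 h2 h3 _ [k /andP[]]; rewrite ?inE /= => h4 h5.
  case: (BMsplit fBM) => [HB|[[H1 H2]|[H1 H2]]]; [ | | exact: hTB].
  + rewrite /BQar in HB; exfalso; slia.
  + rewrite /STar in H2; exfalso; slia.
- fanx h; finish fBM.
- fanx h; finish fBM.
- edgex h; finish fBM.
- edgex h; finish fBM.
Qed.

Section RL.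
Variables (r l : 'I_n).
Hypothesis hr : r < a.
Hypothesis hl : b <= l < c.
Hypothesis n1 : ~ ((r:nat) = 0 /\ (l:nat) = c.-1).
Hypothesis n2 : ~ ((r:nat) = a.-1 /\ (l:nat) = b).

Lemma X1ex : exists X1, triangulation (S1 N r l) X1 /\ forall f, f \in X1 -> f \in BM -> False.
Proof.
case: (eqVneq (r:nat) a.-1) => [ra|ra].
  exists (fan (S1 N r l) l); split.
    by apply: fan_tri; rewrite /S1 ?inE /=; slia.
  by move=> -[p q] h fBM; fanx h; finish fBM.
exists (fan (S1 (S1 N r l) r ob1) r :|: fan (S2 (S1 N r l) r ob1) l :|: [set (r, ob1)]); split.
  apply: glue12.
  - apply: (mk_diag (k := oa1) (k' := l)); rewrite /S1 ?inE /=; slia.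
  - apply: fan_tri; rewrite /S1 /S2 ?inE /=; slia.
  - apply: fan_tri; rewrite /S1 /S2 ?inE /=; slia.
move=> -[p q] h fBM; move: h; rewrite !in_setU !in_set1 => /orP[/orP[h|h]|h].
- fanx h; finish fBM.
- fanx h; finish fBM.
- edgex h; finish fBM.
Qed.

Lemma X2ex : exists X2, triangulation (S2 N r l) X2 /\ forall f, f \in X2 -> f \in BM -> False.
Proof.
case: (eqVneq (r:nat) 0) => [r0|r0].
  exists (fan (S2 N r l) l); split.
    by apply: fan_tri; rewrite /S2 ?inE /=; slia.
  by move=> -[p q] h fBM; fanx h; finish fBM.
exists (fan (S1 (S2 N r l) r oc) l :|: fan (S2 (S2 N r l) r oc) r :|: [set (r, oc)]); split.
  apply: glue12.
  - apply: (mk_diag (k := l) (k' := o0)); rewrite /S2 ?inE /=; slia.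
  - apply: fan_tri; rewrite /S1 /S2 ?inE /=; slia.
  - apply: fan_tri; rewrite /S1 /S2 ?inE /=; slia.
move=> -[p q] h fBM; move: h; rewrite !in_setU !in_set1 => /orP[/orP[h|h]|h].
- fanx h; finish fBM.
- fanx h; finish fBM.
- edgex h; finish fBM.
Qed.

Lemma sat_RL : ~ blocker N (BM :\ (r, l)).
Proof.
have [X1 [t1 h1]] := X1ex; have [X2 [t2 h2]] := X2ex.
have dN : is_diag N (r, l).
  apply: (mk_diag (k := oa) (k' := on1)); rewrite ?inE /=; slia.
have tT := glue12 dN t1 t2.
apply: (not_blocker tT) => f h fBM; move: h; rewrite !in_setU !in_set1 => /orP[/orP[h|h]|/eqP-> //].
- by case: (h1 _ h fBM).
- by case: (h2 _ h fBM).
Qed.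
End RL.

Lemma sat_BTQ (p0 t : 'I_n) : a <= p0 < b -> c <= t -> ~ blocker N (BM :\ (p0, t)).
Proof.
move=> hp ht.
have dN : is_diag N (p0, t).
  apply: (mk_diag (k := ob) (k' := o0)); rewrite ?inE /=; slia.
have t1 : triangulation (S1 N p0 t) (fan (S1 N p0 t) obp1).
  apply: fan_tri; rewrite /S1 ?inE /=; slia.
have t2 : triangulation (S2 N p0 t) (fan (S2 N p0 t) o1).
  apply: fan_tri; rewrite /S2 ?inE /=; slia.
have tT := glue12 dN t1 t2.
apply: (not_blocker tT) => -[p q] h fBM; move: h.
rewrite !in_setU !in_set1 => /orP[/orP[h|h]|/eqP-> //].
- fanx h; finish fBM.
- fanx h; finish fBM.
Qed.

Lemma sat_all e : e \in BM -> ~ blocker N (BM :\ e).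
Proof.
case: e => r l; rewrite {1}/BM !inE => /orP[/orP[h|h]|h].
- move: h; rewrite /BQ /edge_is ?inE /= => h.
  case: (boolP (r < a)) => hr.
    apply: sat_RL; slia.
  apply: sat_BTQ; slia.
- exact: sat_BT.
- exact: sat_BB.
Qed.

End Main.

Unset Implicit Arguments.

Theorem proposition3p2 (n a b c : nat) (BT BB : {set edge n}) :
  0 < a -> a < b -> b < c -> c < n.-1 ->
  let VR := [set i : 'I_n | i < a] in
  let VB := [set i : 'I_n | (a <= i) && (i < b)] in
  let VL := [set i : 'I_n | (b <= i) && (i < c)] in
  let VT := [set i : 'I_n | c <= i] in
  3 <= #|VL| -> 3 <= #|VR| -> 2 <= #|VT| -> 2 <= #|VB| ->
  let BQ := [set e : edge n | ((e.1 \in VR) && (e.2 \in VL))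
                              || ((e.1 \in VB) && (e.2 \in VT))] in
  saturated_blocker (VT :|: [set i : 'I_n | (val i == 0) || (val i == c.-1)]) BT ->
  saturated_blocker (VB :|: [set i : 'I_n | (val i == a.-1) || (val i == b)]) BB ->
  let BM := [set e in BQ | ~~ edge_is e 0 c.-1 && ~~ edge_is e a.-1 b]
              :|: BT :|: BB in
  saturated_blocker [set: 'I_n] BM /\
  #|BM| = #|VT| * #|VB| + #|VL| * #|VR| + #|BT| + #|BB| - 2.
Proof.
move=> a0 ab bc cn VR VB VL VT hL hR hT hB BQ sT sB BMl.
have Ha : 2 < a.
  have [x [y [z [xR yR zR [d1 d2 d3]]]]] := card3 hR.
  move: xR yR zR; rewrite /VR !inE; slia.
have Hab : a + 2 <= b.
  have [x [y [xR yR d1]]] := card2 hB.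
  move: xR yR; rewrite /VB !inE; slia.
have Hbc : b + 3 <= c.
  have [x [y [z [xR yR zR [d1 d2 d3]]]]] := card3 hL.
  move: xR yR zR; rewrite /VL !inE; slia.
have Hcn : c + 2 <= n by slia.
have sBT : saturated_blocker (ST n c) BT by exact: sT.
have sBB : saturated_blocker (SB n a b) BB by exact: sB.
have -> : BMl = BM a b c BT BB by [].
split; last exact: (card_BM Ha Hab Hbc Hcn sBT sBB).
split; first by split; [exact: (BM_sub Ha Hab Hbc Hcn sBT sBB) | move=> T tT; exact: (BM_block Ha Hab Hbc Hcn sBT sBB tT)].
move=> e eB; exact: (sat_all Ha Hab Hbc Hcn sBT sBB eB).
Qed.
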